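(* (1) If $(\mathsf P,\mathcal O)$ is a semitopology that is Hausdorff and in which every point is quasiregular, then $\mathcal O=\mathcal P(\mathsf P)$. (2) There exists a semitopology that is $T_1$, in which every point is regular (hence quasiregular), and whose set of opens is not the full powerset.
   Context: A semitopology is a pair $(\mathsf P,\mathcal O)$ where $\mathsf P$ is a set and $\mathcal O\subseteq\mathcal P(\mathsf P)$ contains $\varnothing$ and $\mathsf P$ and is closed under arbitrary unions. It is Hausdorff when any two distinct points have disjoint open neighbourhoods, and $T_1$ when for distinct $p_1,p_2$ there are opens $O_1,O_2$ with $p_i\in O_j$ iff $i=j$. Points $p,p'$ are intertwined when every open set containing $p$ intersects every open set containing $p'$; $I(p)$ is the set of points intertwined with $p$; $K(p)=\mathrm{int}(I(p))$ where $\mathrm{int}(R)$ is the union of all open subsets of $R$. $p$ is quasiregular when $K(p)\neq\varnothing$. A set $T$ is topen when it is nonempty, open, and for all open $O,O'$ with $O\cap T\neq\varnothing\neq T\cap O'$ we have $O\cap O'\neq\varnothing$; $p$ is regular when $p\in K(p)$ and $K(p)$ is topen. *)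

(* Defs.v *)
Set Implicit Arguments.

Definition pset (P : Type) := P -> Prop.

Record semitopology (P : Type) := {
  opn : pset P -> Prop;
  opn_empty : opn (fun _ => False);
  opn_full : opn (fun _ => True);
  opn_union : forall (F : pset P -> Prop),
      (forall O, F O -> opn O) -> opn (fun x => exists O, F O /\ O x)
}.

Section Defs.
Variables (P : Type) (S : semitopology P).

Definition Hausdorff : Prop :=
  forall p1 p2 : P, p1 <> p2 ->
    exists O1 O2, opn S O1 /\ opn S O2 /\ O1 p1 /\ O2 p2 /\
      (forall x, ~ (O1 x /\ O2 x)).

Definition T1 : Prop :=
  forall p1 p2 : P, p1 <> p2 ->
    exists O1 O2, opn S O1 /\ opn S O2 /\
      O1 p1 /\ ~ O1 p2 /\ O2 p2 /\ ~ O2 p1.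

Definition intertwined (p p' : P) : Prop :=
  forall O O', opn S O -> opn S O' -> O p -> O' p' -> exists x, O x /\ O' x.

Definition Iset (p : P) : pset P := fun p' => intertwined p p'.

Definition interior (R : pset P) : pset P :=
  fun x => exists O, opn S O /\ (forall y, O y -> R y) /\ O x.

Definition Kset (p : P) : pset P := interior (Iset p).

Definition quasiregular (p : P) : Prop := exists x, Kset p x.

Definition topen (T : pset P) : Prop :=
  (exists x, T x) /\ opn S T /\
  forall O O', opn S O -> opn S O' ->
    (exists x, O x /\ T x) -> (exists x, T x /\ O' x) ->
    exists x, O x /\ O' x.

Definition regular (p : P) : Prop := Kset p p /\ topen (Kset p).

End Defs.

(* Main.v *)
Require Import Defs.
From Stdlib Require Import Classical FunctionalExtensionality PropExtensionality.

Inductive three := A | B | C.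

Definition opn3 (O : pset three) : Prop :=
  (forall x, ~ O x) \/ exists a b, a <> b /\ O a /\ O b.

Lemma opn3_empty : opn3 (fun _ => False).
Proof. left; auto. Qed.

Lemma opn3_full : opn3 (fun _ => True).
Proof. right; exists A, B; repeat split; discriminate. Qed.

Lemma opn3_union : forall (F : pset three -> Prop),
  (forall O, F O -> opn3 O) -> opn3 (fun x => exists O, F O /\ O x).
Proof.
  intros F H.
  destruct (classic (exists x O, F O /\ O x)) as [[x [O [HF HO]]]|N].
  - destruct (H O HF) as [E|[a [b [ab [Ha Hb]]]]].
    + exfalso; exact (E x HO).
    + right; exists a, b; split; [exact ab|split; exists O; auto].
  - left; intros x [O HO]; apply N; eauto.
Qed.

Definition S3 : semitopology three :=
  {| opn := opn3; opn_empty := opn3_empty; opn_full := opn3_full;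
     opn_union := opn3_union |}.

Lemma meet3 : forall (O O' : pset three) a b c d,
  a <> b -> O a -> O b -> c <> d -> O' c -> O' d -> exists x, O x /\ O' x.
Proof.
  intros O O' a b c d ab Ha Hb cd Hc Hd.
  destruct a, b, c, d; try congruence;
  first [exists A; split; assumption | exists B; split; assumption
        | exists C; split; assumption].
Qed.

Lemma two3 : forall (O : pset three) x, opn3 O -> O x ->
  exists a b, a <> b /\ O a /\ O b.
Proof.
  intros O x [E|H] Hx; [exfalso; exact (E x Hx)|exact H].
Qed.

Lemma meet3' : forall (O O' : pset three) x y, opn3 O -> opn3 O' -> O x -> O' y ->
  exists z, O z /\ O' z.
Proof.
  intros O O' x y H H' Hx Hy.
  destruct (two3 O x H Hx) as [a [b [ab [Ha Hb]]]].
  destruct (two3 O' y H' Hy) as [c [d [cd [Hc Hd]]]].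
  exact (meet3 O O' a b c d ab Ha Hb cd Hc Hd).
Qed.

Lemma inter3 : forall p q, intertwined S3 p q.
Proof. intros p q O O' H H' Hp Hq; exact (meet3' O O' p q H H' Hp Hq). Qed.

Lemma K3 : forall p x, Kset S3 p x.
Proof.
  intros p x. exists (fun _ => True). split; [exact opn3_full|split; auto].
  intros y _; apply inter3.
Qed.

Theorem lemma4p8 :
  (forall (P : Type) (S : semitopology P),
      Hausdorff S -> (forall p, quasiregular S p) ->
      forall X : pset P, opn S X)
  /\
  (exists (P : Type) (S : semitopology P),
      T1 S /\ (forall p, regular S p) /\ (forall p, quasiregular S p) /\
      exists X : pset P, ~ opn S X).
Proof.
  split.
  - intros P S HH HQ X.
    assert (Isng : forall p q, intertwined S p q -> p = q).
    { intros p q Hi. apply NNPP; intro ne.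
      destruct (HH p q ne) as [O1 [O2 [H1 [H2 [H1p [H2q D]]]]]].
      destruct (Hi O1 O2 H1 H2 H1p H2q) as [x Hx]. exact (D x Hx). }
    assert (E : X = (fun x => exists O, (opn S O /\ forall y, O y -> X y) /\ O x)).
    { apply functional_extensionality; intro x; apply propositional_extensionality.
      split.
      - intro Xx. destruct (HQ x) as [z [O [HO [Hsub Hz]]]].
        exists O. assert (Hzx : z = x) by (symmetry; apply Isng, Hsub, Hz).
        subst z. split; [split; [exact HO|]|exact Hz].
        intros y Hy. assert (x = y) by (apply Isng, Hsub, Hy). subst; exact Xx.
      - intros [O [[_ Hs] HO]]. exact (Hs x HO). }
    rewrite E. apply opn_union. intros O [H _]; exact H.
  - exists three, S3. split; [|split; [|split]].
    + intros p1 p2 ne.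
      exists (fun x => x <> p2), (fun x => x <> p1).
      split; [|split; [|split; [|split; [|split]]]]; simpl; auto.
      * right; destruct p2; [exists B, C|exists A, C|exists A, B];
          repeat split; discriminate.
      * right; destruct p1; [exists B, C|exists A, C|exists A, B];
          repeat split; discriminate.
    + intro p. split; [apply K3|].
      split; [exists p; apply K3|split].
      * simpl. right. exists A, B. split; [discriminate|split; apply K3].
      * intros O O' H H' [x [Hx _]] [y [_ Hy]]. exact (meet3' O O' x y H H' Hx Hy).
    + intro p. exists p. apply K3.
    + exists (fun x => x = A). simpl. intros [E|[a [b [ab [Ha Hb]]]]].
      * exact (E A eq_refl).
      * apply ab; congruence.
Qed.
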